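(* Let $\Gamma$ be a geometric distance-regular graph with diameter $D\geq 2$ and intersection number $c_2\geq 2$. Then (i) $\tau_2\geq \psi_1$, and (ii) $\Gamma$ contains an induced quadrangle (a set of four vertices inducing a $4$-cycle).
   Context: A finite connected graph $\Gamma$ with diameter $D$ is distance-regular if there are integers $b_i,c_i$ ($0\le i\le D$) such that for any vertices $x,y$ with $d(x,y)=i$, exactly $c_i$ neighbours of $y$ are at distance $i-1$ from $x$ and exactly $b_i$ neighbours of $y$ are at distance $i+1$ from $x$; its valency is $k=b_0$. Let $\theta_D$ be the smallest eigenvalue of the adjacency matrix. A Delsarte clique is a clique with exactly $1+\frac{k}{-\theta_D}$ vertices. A non-complete distance-regular graph is geometric with respect to a set $\mathcal C$ of Delsarte cliques if every edge lies in exactly one member of $\mathcal C$; it is geometric if such $\mathcal C$ exists. For a vertex $x$ and a set $C$, $d(x,C)=\min_{y\in C}d(x,y)$. It is known that for a Delsarte clique $C$ and a vertex $x$ with $d(x,C)=1$, the number of vertices of $C$ adjacent to $x$ depends only on the intersection numbers of $\Gamma$; this number is denoted $\psi_1$. It is also known that if $\Gamma$ is geometric with respect to $\mathcal C$, then for vertices $x,y$ with $d(x,y)=2$ the number of cliques $C\in\mathcal C$ with $y\in C$ and $d(x,C)=1$ depends neither on the pair $x,y$ nor on the choice of $\mathcal C$; this number is denoted $\tau_2$. *)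

(* Defs.v *)
From HB Require Import structures.
From mathcomp Require Import all_boot all_order all_algebra.
Set Implicit Arguments. Unset Strict Implicit. Unset Printing Implicit Defensive.
Import Order.TTheory GRing.Theory Num.Theory.
Local Open Scope ring_scope.

Section Graph.
Variable n : nat.
Variable e : rel 'I_n.

Fixpoint ball (m : nat) (x : 'I_n) : {set 'I_n} :=
  match m with
  | 0 => [set x]
  | m'.+1 => ball m' x :|: [set z | [exists y in ball m' x, e y z]]
  end.

(* graph distance (for a connected graph on n vertices, every distance is < n,
   and this sum counts the radii i < n with y outside ball i x) *)
Definition gdist (x y : 'I_n) : nat := (\sum_(i < n) (y \notin ball i x))%N.

Definition diameter : nat := (\max_(x : 'I_n) \max_(y : 'I_n) gdist x y)%N.

(* d(x, C) = min_{y in C} d(x, y)  (n is a neutral upper bound) *)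
Definition dist_to_set (x : 'I_n) (C : {set 'I_n}) : nat :=
  \big[minn/n]_(y in C) gdist x y.

Definition is_drg (b c : nat -> nat) : Prop :=
  forall x y : 'I_n,
    #|[set z | e y z & gdist x z == (gdist x y).-1]| = c (gdist x y) /\
    #|[set z | e y z & gdist x z == (gdist x y).+1]| = b (gdist x y).

Definition adjmx (R : nzRingType) : 'M[R]_n := \matrix_(i, j) (e i j)%:R%R.

Definition smallest_eigenvalue (R : realFieldType) (th : R) : Prop :=
  eigenvalue (adjmx R) th /\ (forall a, eigenvalue (adjmx R) a -> (th <= a)%R).

Definition is_clique (C : {set 'I_n}) : Prop :=
  forall x y, x \in C -> y \in C -> x != y -> e x y.

Definition delsarte_clique (R : realFieldType) (th : R) (k : nat)
    (C : {set 'I_n}) : Prop :=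
  is_clique C /\ (#|C|%:R : R) = (1 + k%:R / (- th))%R.

Definition geometric_wrt (R : realFieldType) (th : R) (k : nat)
    (CC : {set {set 'I_n}}) : Prop :=
  (exists x y : 'I_n, x != y /\ ~~ e x y) /\
  (forall C, C \in CC -> delsarte_clique th k C) /\
  (forall x y, e x y -> #|[set C in CC | (x \in C) && (y \in C)]| = 1%N).

End Graph.

(* Main.v *)
Require Import Defs.
From HB Require Import structures.
From mathcomp Require Import all_boot all_order all_algebra.
From mathcomp Require Import zify ring lra.
Set Implicit Arguments. Unset Strict Implicit. Unset Printing Implicit Defensive.
Import Order.TTheory GRing.Theory Num.Theory.

Section Dist.
Variable n : nat.
Variable e : rel 'I_n.
Hypothesis esym : symmetric e.
Hypothesis eirr : irreflexive e.
Hypothesis econn : forall x y, connect e x y.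
Hypothesis n_gt1 : 1 < n.

Lemma ballS i x : ball e i.+1 x = ball e i x :|: [set z | [exists y in ball e i x, e y z]].
Proof. by []. Qed.

Lemma ball_mono i j x : i <= j -> ball e i x \subset ball e j x.
Proof.
move/subnKC <-; elim: (j - i) => [|k IH]; first by rewrite addn0.
by rewrite addnS ballS; apply: subset_trans IH (subsetUl _ _).
Qed.

Lemma ball_adj i y z : e y z -> ball e i y \subset ball e i.+1 z.
Proof.
move=> eyz; elim: i => [|i IH].
  apply/subsetP=> w; rewrite inE => /eqP ->.
  rewrite ballS !inE; apply/orP; right; apply/existsP; exists z.
  by rewrite /= inE eqxx esym.
rewrite (ballS i) (ballS i.+1); apply: setUSS => //.
apply/subsetP=> w; rewrite !inE => /existsP[u /andP[hu euw]].
by apply/existsP; exists u; rewrite euw andbT; apply: (subsetP IH).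
Qed.

Lemma ball_sym i x y : (y \in ball e i x) = (x \in ball e i y).
Proof.
elim: i x y => [|i IH] x y; first by rewrite /= !inE eq_sym.
suff H : forall x y, y \in ball e i.+1 x -> x \in ball e i.+1 y.
  by apply/idP/idP; apply: H.
move=> {}x {}y; rewrite ballS inE => /orP[hy|].
  by rewrite IH in hy; apply: (subsetP (ball_mono _ (leqnSn i))).
rewrite inE => /existsP[z /andP[hz ezy]].
rewrite IH in hz; exact: (subsetP (ball_adj i ezy)).
Qed.

Lemma gdist_sym x y : gdist e x y = gdist e y x.
Proof. by apply: eq_bigr => i _; rewrite ball_sym. Qed.

Lemma mem_ball i x y : i < n -> (y \in ball e i x) = (gdist e x y <= i).
Proof.
move=> hin; rewrite /gdist -(big_mkord xpredT (fun j => (y \notin ball e j x) : nat)).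
case: (boolP (y \in ball e i x)) => hy.
  symmetry; apply/idP; rewrite (big_cat_nat (leq0n i) (ltnW hin)) /=.
  rewrite [X in _ + X]big_nat_cond [X in _ + X]big1 ?addn0; last first.
    move=> j /andP[/andP[hij _] _].
    by rewrite (subsetP (ball_mono x hij) _ hy).
  apply: (@leq_trans (\sum_(0 <= j < i) 1)).
    by apply: leq_sum => j _; exact: leq_b1.
  by rewrite sum_nat_const_nat subn0 muln1.
symmetry; apply/negbTE; rewrite -ltnNge.
rewrite (big_cat_nat (leq0n i.+1) hin) /=.
apply: leq_trans (leq_addr _ _).
rewrite -[X in X <= _](subn0 i.+1) -(muln1 (i.+1 - 0)) -sum_nat_const_nat.
rewrite [X in X <= _]big_nat_cond [X in _ <= X]big_nat_cond; apply: leq_sum => j /andP[/andP[_ hj] _].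
case: (boolP (y \in ball e j x)) => //= hyj.
by move: hy; rewrite (subsetP (ball_mono x (hj : j <= i)) _ hyj).
Qed.

Lemma walk_ball x p z i : z \in ball e i x -> path e z p ->
  last z p \in ball e (i + size p) x.
Proof.
elim: p z i => [|w p IH] z i hz /=; first by rewrite addn0.
case/andP=> ezw hp; rewrite -addSnnS; apply: IH hp.
by rewrite ballS !inE; apply/orP; right; apply/existsP; exists z; rewrite hz ezw.
Qed.

Lemma gdist_lt x y : gdist e x y < n.
Proof.
have hn : n.-1 < n by rewrite prednK ?ltnSn // ltnW.
apply: (@leq_ltn_trans n.-1) hn; rewrite -mem_ball //.
case/connectP: (econn x y) => p hp ->.
case/shortenP: hp => p' hp' huniq _.
apply: (subsetP (ball_mono _ _)) (walk_ball (z:=x) (i:=0) _ hp').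
  move: (card_uniqP huniq); rewrite /= => hc.
  have := max_card (mem (x :: p')); rewrite hc card_ord /= add0n.
  by move=> h; rewrite -ltnS prednK // ltnW.
by rewrite inE.
by rewrite prednK // ltnW.
Qed.

Lemma gdist0 x y : (gdist e x y == 0) = (y == x).
Proof. by rewrite -leqn0 -mem_ball ?inE // ltnW. Qed.

Lemma gdist_refl x : gdist e x x = 0.
Proof. by apply/eqP; rewrite gdist0. Qed.

Lemma gdist1 x y : (gdist e x y == 1) = e x y.
Proof.
rewrite eqn_leq -mem_ball // lt0n gdist0 ballS !inE.
apply/idP/idP.
  case/andP=> /orP[/eqP->|]; first by rewrite eqxx.
  by case/existsP=> z /andP[]; rewrite inE => /eqP ->.
move=> exy; have hne : y != x by apply: contraTneq exy => ->; rewrite eirr.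
rewrite hne andbT; apply/orP; right; apply/existsP; exists x; by rewrite inE eqxx.
Qed.

Lemma gdist_adj x y z : e y z -> gdist e x z <= (gdist e x y).+1.
Proof.
move=> eyz; rewrite gdist_sym (gdist_sym x y).
case: (ltnP (gdist e y x).+1 n) => h; last by apply: ltnW; apply: leq_trans (gdist_lt _ _) h.
rewrite -mem_ball //; apply: (subsetP (ball_adj _ eyz)).
by rewrite mem_ball // ltnW.
Qed.

Lemma gdist_adj2 x y z : e y z ->
  [/\ gdist e x z <= (gdist e x y).+1 & gdist e x y <= (gdist e x z).+1].
Proof. by move=> eyz; split; apply: gdist_adj => //; rewrite esym. Qed.

Lemma pred_nbr x y m : gdist e x y = m.+1 -> exists z, e z y /\ gdist e x z = m.
Proof.
move=> hd.
have hm : m.+1 < n by rewrite -hd gdist_lt.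
have : y \in ball e m.+1 x by rewrite mem_ball // hd.
rewrite ballS inE mem_ball ?hd ?ltnn //=; last exact: ltnW.
rewrite inE => /existsP[z /andP[hz ezy]]; exists z; split => //.
rewrite mem_ball in hz; last exact: ltnW.
apply/eqP; rewrite eqn_leq hz /=.
by have := gdist_adj x ezy; rewrite hd ltnS.
Qed.

Lemma card_sum1 (P Q : pred 'I_n) :
  (\sum_(z | P z) (Q z : nat))%N = #|[set z | P z & Q z]|.
Proof.
rewrite -sum1_card big_mkcond [RHS]big_mkcond; apply: eq_bigr => z _.
by rewrite inE; case: (P z); case: (Q z).
Qed.


Lemma bigmin_le (C : {set 'I_n}) (F : 'I_n -> nat) y :
  y \in C -> \big[minn/n]_(z in C) F z <= F y.
Proof.
rewrite -big_filter => hy.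
have : y \in [seq z <- index_enum 'I_n | z \in C] by rewrite mem_filter hy mem_index_enum.
elim: [seq _ <- _ | _] => [//|w r IH]; rewrite inE big_cons => /orP[/eqP<-|hr].
  exact: geq_minl.
exact: leq_trans (geq_minr _ _) (IH hr).
Qed.

Lemma dts1 x C : dist_to_set e x C = 1 -> x \notin C /\ exists2 z, z \in C & e x z.
Proof.
rewrite /dist_to_set => h; split.
  apply/negP=> hx; have := bigmin_le (gdist e x) hx.
  by rewrite h gdist_refl.
have : \big[minn/n]_(z in C) gdist e x z = n \/
   exists2 z, z \in C & gdist e x z = \big[minn/n]_(z in C) gdist e x z.
  apply: (big_ind (fun m => m = n \/ exists2 z, z \in C & gdist e x z = m)).
  - by left.
  - move=> a a' ha ha'; rewrite /minn; case: ifP => _; [exact: ha|exact: ha'].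
  - by move=> z hz; right; exists z.
rewrite h => -[hn|[z hz /eqP]]; first by exfalso; move: n_gt1 hn; clear; lia.
by rewrite gdist1; exists z.
Qed.

Lemma dts1_intro x (C : {set 'I_n}) z :
  x \notin C -> z \in C -> e x z -> dist_to_set e x C = 1.
Proof.
move=> hx hz exz; apply/eqP; rewrite eqn_leq; apply/andP; split.
  by apply: leq_trans (bigmin_le _ hz) _; rewrite (eqP (_ : gdist e x z == 1)) ?gdist1.
apply: (big_ind (fun m => 1 <= m)) => //; first exact: ltnW.
  by move=> a a' h1 h2; rewrite leq_min h1 h2.
move=> y hy; rewrite lt0n gdist0; apply: contraNneq hx => <-; done.
Qed.

Lemma dist_le2 x (C : {set 'I_n}) z y : is_clique e C ->
  z \in C -> e x z -> y \in C -> gdist e x y <= 2.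
Proof.
move=> hC hz exz hy; case: (eqVneq y z) => [->|hne].
  by rewrite (eqP (_ : gdist e x z == 1)) ?gdist1.
have ezy : e z y by apply: hC => //; rewrite eq_sym.
apply: leq_trans (gdist_adj x ezy) _.
by rewrite (eqP (_ : gdist e x z == 1)) ?gdist1.
Qed.

Variables b c : nat -> nat.
Hypothesis drg : is_drg e b c.

Local Notation gd := (gdist e).
Local Notation D := (diameter e).

Lemma gd_le_D x y : gd x y <= D.
Proof.
rewrite /diameter; apply: leq_trans (leq_bigmax x).
exact: (leq_bigmax (F := fun y => gd x y) y).
Qed.

Lemma exists_D : exists x y, gd x y = D.
Proof.
have i0 : 'I_n := Ordinal (ltnW n_gt1).
rewrite /diameter (bigop.bigmax_eq_arg i0) //.
set x := [arg max_(_ > i0) _]; exists x.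
rewrite (bigop.bigmax_eq_arg i0) //; by eexists.
Qed.

Lemma exists_dist x m y : gd x y = m -> forall i, i <= m -> exists z, gd x z = i.
Proof.
elim: m y => [|m IH] y hy i hi.
  by move: hi; rewrite leqn0 => /eqP->; exists y.
case: (ltnP i m.+1) => hi'.
  by case: (pred_nbr hy) => z [_ hz]; exact: IH hz i hi'.
by exists y; rewrite hy; apply/eqP; rewrite eqn_leq hi hi'.
Qed.

Lemma c0 : c 0 = 0.
Proof.
have i0 : 'I_n := Ordinal (ltnW n_gt1).
case: (drg i0 i0); rewrite gdist_refl => <- _; apply/eqP; rewrite cards_eq0.
apply/eqP/setP=> z; rewrite !inE gdist0 //.
by apply/negP=> /andP[h /eqP hz]; move: h; rewrite hz eirr.
Qed.

Lemma deg y : #|[set z | e y z]| = b 0.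
Proof.
case: (drg y y); rewrite gdist_refl => _ <-; apply: eq_card => z.
by rewrite !inE gdist1 // andbb.
Qed.

Lemma c_pos i : 0 < i -> i <= D -> 0 < c i.
Proof.
move=> h0 hi; case: exists_D => x0 [y0 h].
have [y hy] := exists_dist h hi.
move: h0 hy; case: i hi => // i hi _ hy.
case: (pred_nbr hy) => z [ezy hz].
case: (drg x0 y); rewrite hy => <- _; apply/card_gt0P; exists z.
by rewrite !inE esym ezy hz /=.
Qed.

Lemma b_pos i : i < D -> 0 < b i.
Proof.
move=> hi; case: exists_D => x0 [y0 h].
have [y hy] := exists_dist h hi.
case: (pred_nbr hy) => z [ezy hz].
case: (drg x0 z); rewrite hz => _ <-; apply/card_gt0P; exists y.
by rewrite !inE ezy hy /=.
Qed.

Lemma bD : b D = 0.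
Proof.
case: exists_D => x0 [y0 h]; case: (drg x0 y0); rewrite h => _ <-.
apply/eqP; rewrite cards_eq0; apply/eqP/setP => z; rewrite !inE.
apply/negP=> /andP[_ /eqP hz]; have := gd_le_D x0 z; rewrite hz ltnn //.
Qed.


Variable R : realFieldType.
Local Open Scope ring_scope.

Definition kR : R := (b 0)%:R.
Definition bR i : R := (b i)%:R.
Definition cR i : R := (c i)%:R.
Definition aR i : R := kR - bR i - cR i.

Lemma sum_ind (P Q : pred 'I_n) :
  \sum_(z | P z) ((Q z : nat)%:R : R) = #|[set z | P z & Q z]|%:R.
Proof. by rewrite -natr_sum card_sum1. Qed.

Lemma sum_cst (P : pred 'I_n) (a : R) :
  \sum_(z | P z) a = #|[set z | P z]|%:R * a.
Proof.
rewrite (eq_bigr (fun z => 1 * a)); last by move=> *; rewrite mul1r.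
rewrite -mulr_suml; congr (_ * _).
transitivity (\sum_(z | P z) (((xpredT z) : nat)%:R : R)).
  by apply: eq_bigr => z _.
rewrite sum_ind; congr (_%:R); apply: eq_card => z; by rewrite !inE andbT.
Qed.

Lemma deg_sum y : \sum_(z | e y z) (1 : R) = kR.
Proof.
rewrite sum_cst mulr1 /kR -(deg y); congr (_%:R); apply: eq_card => z; by rewrite !inE.
Qed.

Lemma three (F : nat -> R) d g : (0 < d)%N -> (d <= g.+1)%N -> (g <= d.+1)%N ->
  F g = (g == d.-1)%:R * F d.-1 + (g == d)%:R * F d + (g == d.+1)%:R * F d.+1.
Proof.
case: d => // d _ h1 h2 /=.
have : (g == d) || (g == d.+1) || (g == d.+2) by apply/orP; lia.
have E1 : (d == d.+1) = false by apply/eqP; lia.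
have E2 : (d == d.+2) = false by apply/eqP; lia.
have E3 : (d.+1 == d) = false by apply/eqP; lia.
have E4 : (d.+2 == d) = false by apply/eqP; lia.
have E5 : (d.+1 == d.+2) = false by apply/eqP; lia.
have E6 : (d.+2 == d.+1) = false by apply/eqP; lia.
case/orP=> [/orP[]|] /eqP ->; rewrite ?eqxx ?E1 ?E2 ?E3 ?E4 ?E5 ?E6 /=;
  rewrite ?mulr1n ?mulr0n ?mul1r ?mul0r ?addr0 ?add0r //.
Qed.

Lemma nbr_sum (F : nat -> R) x y :
  \sum_(z | e y z) F (gd x z) = cR (gd x y) * F (gd x y).-1
     + aR (gd x y) * F (gd x y) + bR (gd x y) * F (gd x y).+1.
Proof.
have [cd bd] := drg x y.
set d := gd x y in cd bd *.
have hcnt j : \sum_(z | e y z) ((gd x z == j : nat)%:R : R)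
   = #|[set z | e y z & gd x z == j]|%:R := sum_ind _ _.
case: (posnP d) => hd.
  have yx : y = x by apply/eqP; rewrite -gdist0 -/d hd.
  transitivity (\sum_(z | e y z) ((gd x z == d.+1 : nat)%:R * F d.+1)).
    apply: eq_bigr => z eyz; rewrite hd.
    have /eqP -> : gd x z == 1%N by rewrite gdist1 -yx.
    by rewrite eqxx mulr1n mul1r.
  rewrite -mulr_suml hcnt bd /aR /kR /bR /cR hd c0; ring.
have key : forall G : nat -> R, \sum_(z | e y z) G (gd x z) =
    cR d * G d.-1 + #|[set z | e y z & gd x z == d]|%:R * G d + bR d * G d.+1.
  move=> G.
  rewrite (eq_bigr (fun z => (gd x z == d.-1)%:R * G d.-1 + (gd x z == d)%:R * G d
            + (gd x z == d.+1)%:R * G d.+1)); last first.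
    by move=> z eyz; case: (gdist_adj2 x eyz) => h1 h2; apply: three.
  by rewrite !big_split /= -!mulr_suml !hcnt cd bd.
have hk := key (fun _ => 1); rewrite /= deg_sum in hk.
rewrite key /aR; set N := (#|_|%:R : R) in hk *.
have -> : N = kR - bR d - cR d by rewrite hk; ring.
ring.
Qed.


Definition S (f : 'I_n -> R) x i := \sum_(z | gd x z == i) f z.
Definition T (f : 'I_n -> R) x i := \sum_(z | (gd x z).+1 == i) f z.

Lemma S_ind f x i : S f x i = \sum_z f z * (gd x z == i)%:R.
Proof.
rewrite /S big_mkcond; apply: eq_bigr => z _.
by case: (gd x z == i); rewrite ?mulr1n ?mulr0n ?mulr1 ?mulr0.
Qed.

Lemma T_ind f x i : T f x i = \sum_z f z * ((gd x z).+1 == i)%:R.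
Proof.
rewrite /T big_mkcond; apply: eq_bigr => z _.
by case: ((gd x z).+1 == i); rewrite ?mulr1n ?mulr0n ?mulr1 ?mulr0.
Qed.

Lemma DC f x i : \sum_(w | gd x w == i) \sum_(z | e w z) f z =
  cR i.+1 * S f x i.+1 + aR i * S f x i + bR i.-1 * T f x i.
Proof.
transitivity (\sum_w \sum_z ((gd x w == i)%:R * ((e w z)%:R * f z))).
  rewrite big_mkcond; apply: eq_bigr => w _.
  case: (gd x w == i) => /=.
    rewrite big_mkcond; apply: eq_bigr => z _.
    by case: (e w z); rewrite /= ?mulr1n ?mulr0n ?mul1r ?mul0r.
  by rewrite big1 // => z _; rewrite mulr0n mul0r.
rewrite exchange_big /=.
transitivity (\sum_z f z * \sum_(w | e z w) ((gd x w == i)%:R : R)).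
  apply: eq_bigr => z _; rewrite mulr_sumr [RHS]big_mkcond; apply: eq_bigr => w _.
  rewrite (esym z w); case: (e w z); rewrite /= ?mulr1n ?mulr0n ?mul1r ?mul0r ?mulr0 //.
  by rewrite mulrC.
rewrite !S_ind T_ind ![in RHS]mulr_sumr -![in RHS]big_split /=; apply: eq_bigr => z _.
rewrite (nbr_sum (fun j => (j == i)%:R)).
move: (gd x z) => g.
have h1 : cR g * (g.-1 == i)%:R = cR i.+1 * (g == i.+1)%:R.
  case: g => [|m] /=; first by rewrite /cR c0 !mulr0n mul0r mulr0.
  by case: (eqVneq m i) => [->|hne]; rewrite ?eqxx // eqSS (negbTE hne) mulr0n !mulr0.
have h2 : aR g * (g == i)%:R = aR i * (g == i)%:R.
  by case: (eqVneq g i) => [->|hne]; rewrite ?mulr0n ?mulr0.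
have h3 : bR g * (g.+1 == i)%:R = bR i.-1 * (g.+1 == i)%:R.
  by case: (eqVneq g.+1 i) => [<-|hne]; rewrite ?mulr0n ?mulr0.
rewrite h1 h2 h3; ring.
Qed.


Fixpoint wp (t : R) (i : nat) : R * R :=
  if i is i'.+1 then
    let p := wp t i' in (p.2, ((t - aR i) * p.2 - bR i' * p.1) / cR i.+1)
  else (1, (t - aR 0) / cR 1).
Definition w t i := (wp t i).1.

Lemma w0 t : w t 0 = 1. Proof. by []. Qed.
Lemma w1 t : w t 1 = (t - aR 0) / cR 1. Proof. by []. Qed.
Lemma wSS t i : w t i.+2 = ((t - aR i.+1) * w t i.+1 - bR i * w t i) / cR i.+2.
Proof. by []. Qed.

Definition eig (f : 'I_n -> R) (t : R) := forall y, \sum_(z | e y z) f z = t * f y.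

Lemma aR0 : aR 0 = 0.
Proof. by rewrite /aR /kR /cR c0 /bR subrr sub0r oppr0. Qed.

Lemma cR_neq0 i : (0 < i)%N -> (i <= D)%N -> cR i != 0.
Proof. by move=> h1 h2; rewrite /cR pnatr_eq0 -lt0n c_pos. Qed.

Lemma S0 f x : S f x 0 = f x.
Proof. by rewrite /S (big_pred1 x) // => z; rewrite /= gdist0. Qed.

Lemma T0 f x : T f x 0 = 0.
Proof. by rewrite /T big_pred0. Qed.

Lemma TS f x i : T f x i.+1 = S f x i.
Proof. by rewrite /T /S; apply: eq_bigl => z; rewrite eqSS. Qed.

Lemma DCe f t x i : eig f t ->
  t * S f x i = cR i.+1 * S f x i.+1 + aR i * S f x i + bR i.-1 * T f x i.
Proof.
move=> hf; rewrite -DC /S mulr_sumr; apply: eq_bigr => y _; by rewrite hf.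
Qed.

Lemma solve_lin (cc s rhs : R) : cc != 0 -> cc * s = rhs -> s = rhs / cc.
Proof. by move=> hc <-; rewrite [cc * s]mulrC mulfK. Qed.

Lemma sph f t x : eig f t -> forall i, (i <= D)%N -> S f x i = w t i * f x.
Proof.
move=> hf.
have key : forall i, (i.+1 <= D)%N -> S f x i = w t i * f x /\ S f x i.+1 = w t i.+1 * f x.
  elim=> [|i IH] hi.
    rewrite S0 w0 mul1r; split => //.
    have h := DCe x 0 hf; rewrite T0 S0 mulr0 addr0 in h.
    have hc := cR_neq0 (ltn0Sn 0) hi.
    rewrite (solve_lin (s := S f x 1) (rhs := t * f x - aR 0 * f x) hc); last by rewrite h; ring.
    rewrite w1; ring.
  have [h0 h1] := IH (ltnW hi); split => //.
  have h := DCe x i.+1 hf; rewrite TS h0 h1 /= in h.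
  have hc := cR_neq0 (ltn0Sn i.+1) hi.
  rewrite (solve_lin (s := S f x i.+2) (rhs := t * (w t i.+1 * f x) - aR i.+1 * (w t i.+1 * f x)
     - bR i * (w t i * f x)) hc); last by rewrite h; ring.
  rewrite wSS; ring.
case=> [|i] hi; first by rewrite S0 w0 mul1r.
by case: (key i hi).
Qed.


Lemma S_out f x : S f x D.+1 = 0.
Proof.
rewrite /S big_pred0 // => z; apply/negbTE/eqP => h.
by have := gd_le_D x z; rewrite h ltnn.
Qed.

Lemma endc f t x : eig f t -> f x != 0 -> (0 < D)%N ->
  t * w t D = aR D * w t D + bR D.-1 * w t D.-1.
Proof.
move=> hf hfx hD.
have h := DCe x D hf; rewrite S_out mulr0 add0r in h.
have hD' : D = D.-1.+1 by rewrite prednK.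
rewrite hD' TS in h; rewrite -hD' in h.
rewrite (sph x hf (leqnn _)) (sph x hf (leq_pred _)) in h.
apply: (mulIf hfx).
transitivity (t * (w t D * f x)); first by ring.
by rewrite h; ring.
Qed.

Definition kap i := w kR i.

Lemma eig1 : eig (fun _ => 1) kR.
Proof. by move=> y; rewrite deg_sum mulr1. Qed.

Lemma kap_pos i : (i <= D)%N -> 0 < kap i.
Proof.
move=> hi; case: exists_D => x0 [y0 h]; have [z hz] := exists_dist h hi.
have := sph x0 eig1 hi; rewrite mulr1 /kap => <-.
rewrite /S (bigD1 z) /=; last by rewrite hz.
have : 0 <= \sum_(i0 | (gd x0 i0 == i) && (i0 != z)) (1 : R) by apply: sumr_ge0.
lra.
Qed.

Lemma kap_neq0 i : (i <= D)%N -> kap i != 0.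
Proof. by move=> h; rewrite gt_eqF // kap_pos. Qed.

Lemma kap_two i : (i < D)%N -> cR i.+1 * kap i.+1 = bR i * kap i.
Proof.
elim: i => [|i IH] hi.
  have hc := cR_neq0 (ltn0Sn 0) hi.
  by rewrite /kap w1 aR0 subr0 mulrC divfK // w0 mulr1.
have hc := cR_neq0 (ltn0Sn i.+1) hi.
rewrite /kap wSS mulrC divfK // -/(kap i.+1) -/(kap i).
have := IH (ltnW hi); rewrite /aR => h.
transitivity ((kR - (kR - bR i.+1 - cR i.+1)) * kap i.+1 - bR i * kap i); first by [].
rewrite -h; ring.
Qed.


Lemma eig_of_eigenvalue t : eigenvalue (adjmx e R) t -> exists f x, eig f t /\ f x != 0.
Proof.
move/eigenvalueP => [v hv hv0]; exists (fun j => v 0 j).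
have : [exists j, v 0 j != 0].
  apply: contraR hv0 => /existsPn h; apply/eqP/rowP => j; rewrite mxE.
  by apply/eqP; move: (h j); rewrite negbK.
case/existsP => j hj; exists j; split => // y.
have := congr1 (fun M : 'M[R]_(1,n) => M 0 y) hv; rewrite !mxE => <-.
rewrite big_mkcond; apply: eq_bigr => z _; rewrite /adjmx mxE (esym y z).
by case: (e z y); rewrite /= ?mulr1 ?mulr0.
Qed.

Variable th : R.
Hypothesis hD2 : (2 <= D)%N.
Hypothesis endc_th : th * w th D = aR D * w th D + bR D.-1 * w th D.-1.

Definition u i := w th i / kap i.

Lemma kR_neq0 : kR != 0.
Proof. by rewrite /kR pnatr_eq0 -lt0n b_pos //; apply: leq_trans hD2. Qed.

Lemma AG x y : \sum_(z | e y z) u (gd x z) = th * u (gd x y).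
Proof.
rewrite nbr_sum; have := gd_le_D x y; move: (gd x y) => d hd.
have hc1 : cR 1 != 0 by apply: cR_neq0 => //; apply: leq_trans hD2.
have hk := kR_neq0.
case: d hd => [|m] hd.
  rewrite /u /kap /= !w1 !w0 aR0 !subr0 /cR c0 /= -/(cR 1) -/kR.
  field.
  by apply/andP; split.
have hk0 := kap_neq0 (ltnW hd); have hk1 := kap_neq0 hd.
have e1 : cR m.+1 = bR m * kap m / kap m.+1.
  by apply: (mulIf hk1); rewrite divfK // kap_two.
case: (ltnP m.+1 D) => hmD.
  have hk2 := kap_neq0 hmD.
  have hc2 := cR_neq0 (ltn0Sn m.+1) hmD.
  have e2 : bR m.+1 = cR m.+2 * kap m.+2 / kap m.+1.
    by apply: (mulIf hk1); rewrite divfK // kap_two.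
  rewrite e1 e2 /u wSS.
  field.
  by rewrite hk2 hk1 hc2 hk0.
have hmD' : m.+1 = D by apply/eqP; rewrite eqn_leq hd hmD.
have hb : bR m.+1 = 0 by rewrite /bR hmD' bD.
rewrite e1 hb /u mul0r addr0.
move: endc_th; rewrite -hmD' /= => hE.
transitivity ((aR m.+1 * w th m.+1 + bR m * w th m) / kap m.+1).
  by field; apply/andP; split.
transitivity ((th * w th m.+1) / kap m.+1); first by rewrite hE.
by field.
Qed.

Definition lam := \sum_(i < D.+1) u i * w th i.

Lemma lam_eq f x : eig f th -> \sum_z u (gd x z) * f z = lam * f x.
Proof.
move=> hf.
transitivity (\sum_z \sum_(i < D.+1) ((gd x z == i)%:R * (u i * f z))).
  apply: eq_bigr => z _.
  have hz : (gd x z < D.+1)%N by rewrite ltnS gd_le_D.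
  rewrite (bigD1 (Ordinal hz)) //= eqxx mulr1n mul1r big1 ?addr0 // => i hi.
  rewrite (_ : (gd x z == i) = false) ?mulr0n ?mul0r //.
  apply/negbTE; apply: contra hi => /eqP h; apply/eqP/val_inj; by rewrite /= h.
rewrite exchange_big /lam mulr_suml; apply: eq_bigr => i _.
rewrite -mulrA -(sph x hf (ltn_ord i : (i <= D)%N)) S_ind mulr_sumr.
by apply: eq_bigr => z _; ring.
Qed.

Lemma lam_pos : 0 < lam.
Proof.
rewrite /lam big_ord_recl /= /u /kap !w0 divr1 mul1r.
have : 0 <= \sum_(i < D) w th (bump 0 i) / w kR (bump 0 i) * w th (bump 0 i).
  apply: sumr_ge0 => i _; rewrite mulrAC -expr2; apply: divr_ge0; first exact: sqr_ge0.
  by apply: ltW; apply: (@kap_pos (bump 0 i)); rewrite /bump /= add1n.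
lra.
Qed.


Lemma u0 : u 0 = 1.
Proof. by rewrite /u /kap !w0 divr1. Qed.

Lemma u1 : u 1 = th / kR.
Proof.
have hc1 : cR 1 != 0 by apply: cR_neq0 => //; apply: leq_trans hD2.
have hk := kR_neq0.
rewrite /u /kap !w1 aR0 !subr0; field.
by apply/andP; split.
Qed.

Lemma card_in (C : {set 'I_n}) : #|[set z | z \in C]| = #|C|.
Proof. by apply: eq_card => z; rewrite inE. Qed.

Lemma h_zero (C : {set 'I_n}) : is_clique e C -> th != 0 ->
  #|C|%:R = 1 + kR / (- th) -> forall x, \sum_(y in C) u (gd y x) = 0.
Proof.
move=> hC hth hcard.
pose h := fun x => \sum_(y in C) u (gd y x).
have heig : eig h th.
  move=> v; rewrite /h exchange_big mulr_sumr; apply: eq_bigr => y _; exact: AG.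
have hsum : \sum_(y in C) h y = 0.
  rewrite big1 // => y hy; rewrite /h (bigD1 y) //= gdist_refl // u0.
  rewrite (eq_bigr (fun _ => u 1)); last first.
    move=> y' /andP[hy' hne]; have ey : e y' y by apply: hC.
    by rewrite (eqP (_ : gd y' y == 1%N)) ?gdist1.
  rewrite sum_cst.
  have hc : (#|[set z | (z \in C) && (z != y)]|%:R : R) = #|C|%:R - 1.
    have := sum_cst (fun z => z \in C) 1; rewrite (bigD1 y) //= sum_cst card_in.
    rewrite !mulr1 => <-; ring.
  rewrite hc hcard u1; field.
  by apply/andP; split; [exact: kR_neq0|].
have hsq : \sum_x h x ^+ 2 = 0.
  transitivity (\sum_x \sum_(y in C) u (gd y x) * h x).
    by apply: eq_bigr => x _; rewrite expr2 {1}/h mulr_suml.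
  rewrite exchange_big /=.
  rewrite (eq_bigr (fun y => lam * h y)); last by move=> y _; exact: lam_eq.
  by rewrite -mulr_sumr hsum mulr0.
move=> x.
have := psumr_eq0P (fun x _ => sqr_ge0 (h x)) hsq (i := x) isT.
by move/eqP; rewrite sqrf_eq0 => /eqP.
Qed.

Lemma psi_eq (C : {set 'I_n}) x' z : is_clique e C -> th != 0 ->
  #|C|%:R = 1 + kR / (- th) -> x' \notin C -> z \in C -> e x' z ->
  (#|[set y in C | e x' y]|%:R : R) = - (1 + kR / (- th)) * u 2 / (u 1 - u 2).
Proof.
move=> hC hth hcard hx' hz exz.
have h0 := h_zero hC hth hcard x'.
rewrite (bigID (fun y => e x' y)) /= in h0.
rewrite (eq_bigr (fun _ => u 1)) in h0; last first.
  by move=> y /andP[_ hy]; rewrite gdist_sym (eqP (_ : gd x' y == 1%N)) ?gdist1.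
rewrite [X in _ + X](eq_bigr (fun _ => u 2)) in h0; last first.
  move=> y /andP[hy hny].
  have h2 := dist_le2 hC hz exz hy.
  have hn0 : gd x' y != 0%N by rewrite gdist0 //; apply: contraNneq hx' => <-.
  have hn1 : gd x' y != 1%N by rewrite gdist1.
  rewrite gdist_sym; congr (u _); apply/eqP; rewrite eqn_leq h2 /=.
  by move: hn0 hn1 h2; case: (gd x' y) => [|[|k]].
rewrite !sum_cst in h0.
set psi := (#|[set y in C | e x' y]|%:R : R).
set psi' := (#|[set z | (z \in C) && ~~ e x' z]|%:R : R) in h0.
have hC' : (#|C|%:R : R) = psi + psi'.
  have := sum_cst (fun z => z \in C) 1; rewrite (bigID (fun y => e x' y)) /= !sum_cst card_in.
  by rewrite !mulr1 => ->.
have hpsi : psi' = #|C|%:R - psi by rewrite hC'; ring.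
rewrite hpsi in h0.
have hCn0 : (#|C|%:R : R) != 0.
  by rewrite pnatr_eq0 -lt0n; apply/card_gt0P; exists z.
have hne : u 1 - u 2 != 0.
  apply/negP => /eqP h12.
  have hu : u 1 = u 2 by apply/eqP; rewrite -subr_eq0 h12.
  have hu2 : u 2 = 0.
    have : (#|C|%:R : R) * u 2 = 0 by rewrite -h0 hu; ring.
    by move/eqP; rewrite mulf_eq0 (negbTE hCn0) /= => /eqP.
  move: hu; rewrite hu2 u1 => /eqP; rewrite mulf_eq0 invr_eq0 (negbTE hth) /=.
  by rewrite (negbTE kR_neq0).
rewrite -hcard; apply: solve_lin hne _.
transitivity (psi * u 1 + (#|C|%:R - psi) * u 2 - #|C|%:R * u 2); first by ring.
rewrite h0; ring.
Qed.


Lemma th_neq0 CC : geometric_wrt e th (b 0) CC -> th != 0.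
Proof.
case=> _ [hdel hone].
case: exists_D => x0 [y0 hD]; have [y hxy] := exists_dist hD (ltnW hD2).
have exy : e x0 y by rewrite -gdist1 hxy.
have /eqP/cards1P [C0 hC0] := hone _ _ exy.
have : C0 \in [set C in CC | (x0 \in C) && (y \in C)] by rewrite hC0 set11.
rewrite inE => /andP[h1 /andP[h2 h3]].
have hne : x0 != y by apply: contraTneq exy => ->; rewrite eirr.
have h2C : (2 <= #|C0|)%N.
  have := subset_leq_card (_ : [set x0; y] \subset C0); rewrite cards2 hne; apply.
  by apply/subsetP => v; rewrite !inE => /orP[] /eqP->.
case: (hdel _ h1) => _ hcard.
apply/negP => /eqP h0; move: hcard; rewrite h0 oppr0 invr0 mulr0 addr0.
move/eqP; rewrite pnatr_eq1 => /eqP h.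
by move: h2C; rewrite h.
Qed.

Hypothesis hth : th != 0.

Definition Psi := - (1 + kR / (- th)) * u 2 / (u 1 - u 2).

Lemma psi_const C x' : delsarte_clique e th (b 0) C -> dist_to_set e x' C = 1%N ->
  (#|[set y in C | e x' y]|%:R : R) = Psi.
Proof.
case=> hC hcard /dts1 [hx' [z hz exz]].
exact: psi_eq hC hth hcard hx' hz exz.
Qed.

Lemma psi_same C x' C' y' : delsarte_clique e th (b 0) C -> dist_to_set e x' C = 1%N ->
  delsarte_clique e th (b 0) C' -> dist_to_set e y' C' = 1%N ->
  #|[set y in C | e x' y]| = #|[set y in C' | e y' y]|.
Proof.
move=> h1 h2 h3 h4; apply/eqP; rewrite -(eqr_nat R).
by rewrite (psi_const h1 h2) (psi_const h3 h4).
Qed.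

Section Geo.
Variable CC : {set {set 'I_n}}.
Hypothesis hgeo : geometric_wrt e th (b 0) CC.

Lemma geo_del C0 : C0 \in CC -> delsarte_clique e th (b 0) C0.
Proof. by case: hgeo => _ [h _]; apply: h. Qed.

Lemma geo_cl C0 : C0 \in CC -> is_clique e C0.
Proof. by move=> h; case: (geo_del h). Qed.

Lemma uniq_cl p q : e p q -> exists C0, [/\ C0 \in CC, p \in C0, q \in C0 &
  forall C', C' \in CC -> p \in C' -> q \in C' -> C' = C0].
Proof.
case: hgeo => _ [_ h] /h /eqP /cards1P [C0 hC0].
have : C0 \in [set C in CC | (p \in C) && (q \in C)] by rewrite hC0 set11.
rewrite inE => /andP[h1 /andP[h2 h3]]; exists C0; split => // C' h1' h2' h3'.
apply/set1P; rewrite -hC0 inE h1' h2' h3' //.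
Qed.

Definition phi y p := odflt set0 [pick Q in CC | (y \in Q) && (p \in Q)].

Lemma phiP y p : e y p -> [/\ phi y p \in CC, y \in phi y p & p \in phi y p].
Proof.
move=> eyp; rewrite /phi; case: pickP => [Q /andP[h1 /andP[h2 h3]] | hn] //=.
case: (uniq_cl eyp) => C0 [h1 h2 h3 _].
by move: (hn C0); rewrite h1 h2 h3.
Qed.

Lemma part1 x y : gd x y = 2%N -> forall C x', delsarte_clique e th (b 0) C ->
  dist_to_set e x' C = 1%N ->
  (#|[set z in C | e x' z]| <=
   #|[set C0 in CC | (y \in C0) && (dist_to_set e x C0 == 1%N)]|)%N.
Proof.
move=> hxy C x' hdC hd.
case: (pred_nbr hxy) => z [ezy hxz].
have exz : e x z by rewrite -gdist1 hxz.
case: (uniq_cl exz) => C0 [hC0 hx0 hz0 huC0].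
have nexy : ~~ e x y by rewrite -gdist1 hxy.
have hyx : y != x by rewrite -gdist0 hxy.
have hy0 : y \notin C0.
  apply/negP => hy; have : e x y by apply: (geo_cl hC0) => //; rewrite eq_sym.
  by rewrite (negbTE nexy).
have hd0 : dist_to_set e y C0 = 1%N by apply: dts1_intro hy0 hz0 _; rewrite esym.
rewrite (psi_same hdC hd (geo_del hC0) hd0).
set P := [set y0 in C0 | e y y0].
have hPe p : p \in P -> [/\ p \in C0, e y p & e x p].
  rewrite inE => /andP[hp eyp]; split => //.
  apply: (geo_cl hC0) => //; apply: contraTneq eyp => <-.
  by rewrite esym (negbTE nexy).
rewrite -(card_in_imset (f := phi y)); last first.
  move=> p q hp hq hpq; apply/eqP/negPn/negP => hne.
  have [hp0 eyp _] := hPe p hp; have [hq0 eyq _] := hPe q hq.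
  have [h1 h2 h3] := phiP eyp; have [_ _ h3'] := phiP eyq.
  have epq : e p q by apply: (geo_cl hC0).
  case: (uniq_cl epq) => C1 [_ _ _ hu].
  have e1 := hu _ hC0 hp0 hq0.
  have h3'' : q \in phi y p by rewrite hpq.
  have e2 := hu _ h1 h3 h3''.
  by move: hy0; rewrite e1 -e2 h2.
apply: subset_leq_card; apply/subsetP => Q /imsetP[p hp ->].
have [hp0 eyp exp] := hPe p hp; have [h1 h2 h3] := phiP eyp.
rewrite inE h1 h2 /=; apply/eqP; apply: (dts1_intro _ h3 exp).
apply/negP => hx; have : e x y by apply: (geo_cl h1) => //; rewrite eq_sym.
by rewrite (negbTE nexy).
Qed.

Lemma inM_P (x y z : 'I_n) (C0 : {set 'I_n}) : ~~ e x y -> x \in C0 -> C0 \in CC -> z \in C0 -> e y z -> e x z.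
Proof.
move=> nexy hx hC hz eyz; apply: (geo_cl hC) => //.
by apply: contraTneq eyz => <-; rewrite esym (negbTE nexy).
Qed.

Lemma part2 : (2 <= c 2)%N -> exists u0 v0 w0 t0 : 'I_n,
     [/\ e u0 v0, e v0 w0, e w0 t0, e t0 u0
       & [/\ u0 != w0, v0 != t0, ~~ e u0 w0 & ~~ e v0 t0]].
Proof.
move=> hc2.
case: exists_D => x [y0 hD]; have [y hxy] := exists_dist hD hD2.
have nexy : ~~ e x y by rewrite -gdist1 hxy.
have hyx : y != x by rewrite -gdist0 hxy.
pose M := [set z | e y z & gd x z == 1%N].
have hM z : (z \in M) = (e y z && e x z) by rewrite inE gdist1.
have hcM : #|M| = c 2 by case: (drg x y); rewrite hxy.
case: (boolP [exists z1, exists z2, [&& z1 \in M, z2 \in M, z1 != z2 & ~~ e z1 z2]]).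
  case/existsP => z1 /existsP[z2 /and4P[h1 h2 h12 hn]].
  rewrite hM in h1; rewrite hM in h2.
  case/andP: h1 => ey1 ex1; case/andP: h2 => ey2 ex2.
  exists x, z1, y, z2; split => //; first by rewrite esym.
    by rewrite esym.
  by split => //; rewrite eq_sym.
move/existsPn => hno; exfalso.
have hMcl z1 z2 : z1 \in M -> z2 \in M -> z1 != z2 -> e z1 z2.
  move=> h1 h2 h12; move: (hno z1) => /existsPn /(_ z2).
  by rewrite h1 h2 h12 /= negbK.
have : (0 < #|M|)%N by rewrite hcM; apply: leq_trans hc2.
case/card_gt0P => z hzM; have := hzM; rewrite hM => /andP[eyz exz].
case: (uniq_cl exz) => P1 [hP1 hx1 hz1 _].
have hy1 : y \notin P1.
  apply/negP => hy; have : e x y by apply: (geo_cl hP1) => //; rewrite eq_sym.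
  by rewrite (negbTE nexy).
have hd1 : dist_to_set e y P1 = 1%N by apply: dts1_intro hy1 hz1 _.
have hPM : [set p in P1 | e y p] = M :&: P1.
  apply/setP => p; rewrite !inE gdist1.
  case hp: (p \in P1); case eyp: (e y p); rewrite /= ?andbF ?andbT //.
  by rewrite (inM_P nexy hx1 hP1 hp eyp).
case: (boolP (M \subset P1)) => hsub.
  have : (1 < #|M|)%N by rewrite hcM.
  case/card_gt1P => z1 [z2 [h1 h2 h12]].
  have := h1; rewrite hM => /andP[ey1 ex1].
  case: (uniq_cl ey1) => Q [hQ hyQ h1Q huQ].
  have hxQ : x \notin Q.
    apply/negP => hx; have : e x y by apply: (geo_cl hQ) => //; rewrite eq_sym.
    by rewrite (negbTE nexy).
  have hdQ : dist_to_set e x Q = 1%N by apply: dts1_intro hxQ h1Q ex1.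
  have := psi_same (geo_del hQ) hdQ (geo_del hP1) hd1.
  rewrite hPM (setIidPl hsub) hcM => hcard.
  have : (#|[set y0 in Q | e x y0]| <= 1)%N.
    rewrite leqNgt; apply/negP => /card_gt1P [q1 [q2 [hq1 hq2 hq12]]].
    move: hq1 hq2; rewrite !inE => /andP[q1Q exq1] /andP[q2Q exq2].
    have neyx : ~~ e y x by rewrite esym.
    have eyq1 := inM_P neyx hyQ hQ q1Q exq1.
    have eyq2 := inM_P neyx hyQ hQ q2Q exq2.
    have m1 : q1 \in P1 by apply: (subsetP hsub); rewrite hM eyq1.
    have m2 : q2 \in P1 by apply: (subsetP hsub); rewrite hM eyq2.
    have eq12 : e q1 q2 by apply: (geo_cl hQ).
    case: (uniq_cl eq12) => C1 [_ _ _ hu].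
    have e1 := hu _ hQ q1Q q2Q; have e2 := hu _ hP1 m1 m2.
    by move: hy1; rewrite e2 -e1 hyQ.
  by rewrite hcard; move=> h; move: (leq_trans hc2 h).
case/subsetPn: hsub => z' hz'M hz'1.
have := hz'M; rewrite hM => /andP[eyz' exz'].
have hd' : dist_to_set e z' P1 = 1%N by apply: dts1_intro hz'1 hx1 _; rewrite esym.
have := psi_same (geo_del hP1) hd' (geo_del hP1) hd1.
rewrite hPM => heq.
have hsubs : x |: (M :&: P1) \subset [set y0 in P1 | e z' y0].
  apply/subsetP => p; rewrite in_setU1 => /orP[/eqP->|].
    by rewrite inE hx1 esym.
  rewrite in_setI => /andP[hpM hp]; rewrite inE hp /=.
  apply: hMcl => //; by apply/eqP => hzp; move: hz'1; rewrite hzp hp.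
have := subset_leq_card hsubs; rewrite cardsU1 heq.
have -> : x \notin M :&: P1 by rewrite in_setI hM (esym y x) (negbTE nexy).
by rewrite add1n ltnn.
Qed.

End Geo.

End Dist.

Unset Implicit Arguments.
Set Strict Implicit.

Theorem lemma4p2 (R : rcfType) (n : nat) (e : rel 'I_n) (b c : nat -> nat)
    (th : R) :
  symmetric e -> irreflexive e -> (forall x y, connect e x y) ->
  is_drg e b c -> (2 <= diameter e)%N -> (2 <= c 2)%N ->
  smallest_eigenvalue e th ->
  (exists CC, geometric_wrt e th (b 0%N) CC) ->
  (* (i) tau_2 >= psi_1 *)
  (forall CC : {set {set 'I_n}}, geometric_wrt e th (b 0%N) CC ->
   forall x y : 'I_n, gdist e x y = 2%N ->
   forall (C : {set 'I_n}) (x' : 'I_n), delsarte_clique e th (b 0%N) C ->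
     dist_to_set e x' C = 1%N ->
     (#|[set z in C | e x' z]| <=
      #|[set C0 in CC | (y \in C0) && (dist_to_set e x C0 == 1%N)]|)%N) /\
  (* (ii) an induced quadrangle *)
  (exists u v w t : 'I_n,
     [/\ e u v, e v w, e w t, e t u
       & [/\ u != w, v != t, ~~ e u w & ~~ e v t]]).
Proof.
move=> esym eirr econn drg hD hc2 [heig _] [CC0 hCC0].
have n_gt1 : (1 < n)%N.
  case: hCC0 => [[x [y [hxy _]]] _].
  have := subset_leq_card (subsetT [set x; y]).
  by rewrite cards2 hxy cardsT card_ord.
have hth : (th != 0)%R := th_neq0 esym eirr econn n_gt1 hD hCC0.
have [f [x [hf hfx]]] := eig_of_eigenvalue esym heig.
have hE := endc esym eirr econn n_gt1 drg hf hfx (ltnW hD).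
split.
  move=> CC hCC x0 y0 hd C x' hC hd'.
  exact: (part1 esym eirr econn n_gt1 drg hD hE hth hCC hd hC hd').
exact: (part2 esym eirr econn n_gt1 drg hD hE hth hCC0 hc2).
Qed.
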